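(* Let $\mathcal{G}$ be a quantitative concurrent graph game with $F$-expanded game $\mathcal{G}^\star$. (1) If $P$ is a Nash equilibrium profile with set of winners $W$, then every transition of $\mathsf{outcome}(P)$ is safe for $W$. (2) Let $(u,W)$ be a state of $\mathcal{G}^\star$, considered as the initial state. If $P$ is a profile whose outcome (from $(u,W)$) remains in $V\times W$ and takes only transitions that are safe for $W$, then the second-strike profile $\overline{P}$ is a Nash equilibrium.
   Context: A quantitative concurrent graph game is a tuple $\mathcal{G}=\langle \Omega, V, \{\mathsf{Act}_\alpha\}_{\alpha\in\Omega}, v_0, \delta, \mathsf{cost}, F\rangle$: finite players $\Omega$, finite states $V$, finite action sets $\mathsf{Act}_\alpha$ (all enabled everywhere), initial state $v_0$, transition function $\delta: V\times\prod_\alpha\mathsf{Act}_\alpha\to V$, cost function giving each transition a vector $(\mathsf{cost}_\alpha)_\alpha\in\mathbb{N}^\Omega$, and target sets $F_\alpha\subseteq V$. $\mathsf{cost}_\alpha$ of an outcome (sequence of consecutive transitions) is the $\alpha$-cost accumulated until $F_\alpha$ is first visited, $\infty$ if never. Strategies map histories to actions; profiles induce outcomes; a profile is a Nash equilibrium (NE) if no player can strictly lower its own cost by unilaterally changing its strategy. $C_\alpha(u)=\max_\sigma\min_\tau\mathsf{cost}_\alpha(\mathsf{outcome}_u(\sigma,\tau))$ (max over strategies of the coalition $\Omega\setminus\{\alpha\}$, min over strategies of $\alpha$, outcome starting at $u$). The $F$-expanded game $\mathcal{G}^\star$ has states $V\times 2^\Omega$, initial state $(v_0,\emptyset)$, the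 same actions, transitions $\delta^\star((v,S),\vec a)=(\delta(v,\vec a),S\cup\{\alpha: v\in F_\alpha\})$, costs $\mathsf{cost}^\star_\alpha((v,S),\vec a)=\mathsf{cost}_\alpha(v,\vec a)$ if $\alpha\notin S$ and $0$ if $\alpha\in S$, and targets $F^\star_\alpha=\{(v,S):\alpha\in S\}$; strategies, outcomes and profiles of $\mathcal{G}$ and $\mathcal{G}^\star$ correspond bijectively. The set of winners of a profile is the set of players $\alpha$ whose target is visited along its outcome. A transition $(x,\vec a,y)$ (of $\mathcal{G}$ or $\mathcal{G}^\star$) is safe for $W\subseteq\Omega$ if for every $\alpha\in\Omega\setminus W$ and every action vector $\vec b$ obtained from $\vec a$ by possibly changing the action of Player $\alpha$, the resulting transition $(x,\vec b,z)$ satisfies $C_\alpha(z)=\infty$. Second-strike profile $\overline{P}$ of $P$ with outcome $\pi$: each player follows $P$ while others follow $\pi$; once a player $\alpha$ deviates and a state $v'$ off $\pi$ is reached, the others play from $v'$ a fixed memoryless coalition strategy guaranteeing $\mathsf{cost}_\alpha\ge C_\alpha(w)$ from every state $w$. *)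

(* Defs.v *)
From Stdlib Require Import ClassicalEpsilon.
From mathcomp Require Import all_boot.

Set Implicit Arguments.
Unset Strict Implicit.
Unset Printing Implicit Defensive.

(* ---------- extended naturals N ∪ {∞} : None = ∞ ---------- *)
Definition enat := option nat.

Definition ele (x y : enat) : Prop :=
  match x, y with
  | _, None => True
  | None, Some _ => False
  | Some m, Some n => m <= n
  end.

Definition elt (x y : enat) : Prop := ele x y /\ x <> y.

Definition is_glb (S : enat -> Prop) (x : enat) : Prop :=
  (forall y, S y -> ele x y) /\ (forall z, (forall y, S y -> ele z y) -> ele z x).
Definition is_lub (S : enat -> Prop) (x : enat) : Prop :=
  (forall y, S y -> ele y x) /\ (forall z, (forall y, S y -> ele y z) -> ele x z).

(* N ∪ {∞} is a complete lattice, so these are the genuine inf / sup *)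
Definition einf (S : enat -> Prop) : enat := epsilon (inhabits None) (is_glb S).
Definition esup (S : enat -> Prop) : enat := epsilon (inhabits None) (is_lub S).

Record game := Game {
  player : finType;
  state  : finType;
  act    : player -> finType;
  v0     : state;
  delta  : state -> (forall p : player, act p) -> state;
  cost   : state -> (forall p : player, act p) -> player -> nat;
  target : player -> {set state}
}.

Section Games.
Variable G : game.

Definition avec := forall p : player G, act p.

Record history := Hist { hstart : state G; htrans : seq (avec * state G) }.

Definition hlast (h : history) : state G := last (hstart h) (map snd (htrans h)).

Definition strategy (p : player G) := history -> act p.
Definition profile := forall p : player G, strategy p.

Fixpoint ohist (u : state G) (P : profile) (n : nat) : history :=
  match n with
  | 0 => Hist u [::]
  | n'.+1 => let h := ohist u P n' in
             let a : avec := fun p => P p h in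
             Hist u (rcons (htrans h) (a, delta (hlast h) a))
  end.

(* n-th state and n-th action vector of the outcome; the n-th transition is
   (ostate u P n, oact u P n, ostate u P n.+1) *)
Definition ostate (u : state G) (P : profile) (n : nat) : state G := hlast (ohist u P n).
Definition oact (u : state G) (P : profile) (n : nat) : avec := fun p => P p (ohist u P n).

Definition out_cost (s : nat -> state G) (a : nat -> avec) (al : player G) : enat :=
  match excluded_middle_informative (exists k, (fun k => s k \in target al) k) with
  | left H => Some (\sum_(i < ex_minn H) cost (s i) (a i) al)
  | right _ => None
  end.

Definition pcost (u : state G) (P : profile) (al : player G) : enat :=
  out_cost (ostate u P) (oact u P) al.

Definition variant (al : player G) (P Q : profile) : Prop :=
  forall p, p <> al -> forall h, Q p h = P p h.

Definition NE (u : state G) (P : profile) : Prop :=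
  forall al Q, variant al P Q -> ~ elt (pcost u Q al) (pcost u P al).

(* C_α(u) = max_σ min_τ cost_α(outcome_u(σ,τ)); σ ranges over the
   coalition's strategies (the α-component of a profile σ is irrelevant),
   τ over α's strategies *)
Definition Cval (al : player G) (u : state G) : enat :=
  esup (fun x => exists sigma : profile,
          x = einf (fun y => exists Q, variant al sigma Q /\ y = pcost u Q al)).

Definition winners (u : state G) (P : profile) : {set player G} :=
  [set al | if excluded_middle_informative (exists n, ostate u P n \in target al)
            then true else false].

Definition safe (W : {set player G}) (x : state G) (a : avec) : Prop :=
  forall al, al \notin W -> forall b : avec,
    (forall p, p <> al -> b p = a p) -> Cval al (delta x b) = None.

Definition memoryless (m : forall p : player G, state G -> act p) : profile :=
  fun p h => m p (hlast h).

Definition punishing (mu : forall al p : player G, state G -> act p) : Prop :=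
  forall al w Q, variant al (memoryless (mu al)) Q -> ele (Cval al w) (pcost w Q al).

Definition second_strike (s0 : state G) (P : profile)
    (mu : forall al p : player G, state G -> act p) : profile :=
  fun p h =>
    let n := size (htrans h) in
    let sts := hstart h :: map snd (htrans h) in
    let j := find (fun i => nth (hstart h) sts i != ostate s0 P i) (iota 0 n.+1) in
    if j == n.+1 then
      (* no state off pi reached: follow pi *)
      oact s0 P n p
    else if j == 0 then P p h  (* history not starting at s0: irrelevant *)
    else
      let a := oact s0 P j.-1 in
      let b := nth a (map fst (htrans h)) j.-1 in
      match [pick al | (b al != a al) &&
                       [forall q, (b q != a q) ==> (q == al)]] with
      | Some al => mu al p (hlast h)  (* al deviated, off pi: punish al *)
      | None => P p h                 (* not a unilateral deviation: irrelevant *)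
      end.

End Games.

Definition Gstar (G : game) : game :=
  @Game (player G) (state G * {set player G})%type (@act G)
     (v0 G, set0)
     (fun (x : state G * {set player G}) (a : avec G) =>
        (delta x.1 a, x.2 :|: [set al | x.1 \in target al]))
     (fun (x : state G * {set player G}) (a : avec G) (al : player G) =>
        if al \in x.2 then 0 else cost x.1 a al)
     (fun al => [set x : state G * {set player G} | al \in x.2]).

(* Main.v *)
From Stdlib Require Import ClassicalEpsilon FunctionalExtensionality Classical.
Require Import Defs.
From mathcomp Require Import all_boot.
Set Implicit Arguments. Unset Strict Implicit. Unset Printing Implicit Defensive.

Section Gen.
Variable G : game.
Implicit Types (P Q : profile G) (u z : state G).

Lemma hstart_ohist u P k : hstart (ohist u P k) = u.
Proof. by case: k. Qed.

Lemma size_ohist u P k : size (htrans (ohist u P k)) = k.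
Proof. elim: k => [|k IH] //=; by rewrite size_rcons IH. Qed.

Lemma ostateS u P k : ostate u P k.+1 = delta (ostate u P k) (oact u P k).
Proof. by rewrite /ostate /= /hlast /= map_rcons last_rcons. Qed.

Lemma htrans_ohist u P k :
  htrans (ohist u P k) = [seq (oact u P i, ostate u P i.+1) | i <- iota 0 k].
Proof.
elim: k => [|k IH]; first by [].
rewrite -[k.+1]addn1 iotaD map_cat /= cats1 -IH add0n addn1 ostateS.
by [].
Qed.

Lemma nth_states u P k i d : i <= k ->
  nth d (hstart (ohist u P k) :: map snd (htrans (ohist u P k))) i = ostate u P i.
Proof.
rewrite hstart_ohist htrans_ohist; case: i => [|i] //= Hi.
by rewrite -map_comp (nth_map 0) ?size_iota // nth_iota.
Qed.

Lemma nth_acts u P k i d : i < k ->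
  nth d (map fst (htrans (ohist u P k))) i = oact u P i.
Proof.
move=> Hi; rewrite htrans_ohist -map_comp (nth_map 0) ?size_iota // nth_iota //.
Qed.

Lemma hist_eta (h : history G) : Hist (hstart h) (htrans h) = h.
Proof. by case: h. Qed.

Definition glue (H0 h : history G) := Hist (hstart H0) (htrans H0 ++ htrans h).

Lemma hlast_glue H0 h : hstart h = hlast H0 -> hlast (glue H0 h) = hlast h.
Proof. by rewrite /hlast /= map_cat last_cat => ->. Qed.

Lemma shift u Q j z Q' : ostate u Q j = z ->
 (forall k, ohist u Q (j+k) = glue (ohist u Q j) (ohist z Q' k) ->
    forall p, Q p (ohist u Q (j+k)) = Q' p (ohist z Q' k)) ->
 forall k, ohist u Q (j+k) = glue (ohist u Q j) (ohist z Q' k).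
Proof.
move=> Hz Hc; elim=> [|k IH].
  by rewrite addn0 /glue /= cats0 hist_eta.
rewrite addnS /=.
have E : (fun p => Q p (ohist u Q (j+k))) = (fun p => Q' p (ohist z Q' k)).
  by apply: functional_extensionality_dep => p; apply: Hc.
rewrite E IH /glue /= hstart_ohist rcons_cat.
have HL := hlast_glue (H0:=ohist u Q j) (h:=ohist z Q' k).
rewrite /glue !hstart_ohist in HL; rewrite HL //.
Qed.

Lemma shift_state u Q j z Q' : ostate u Q j = z ->
 (forall k, ohist u Q (j+k) = glue (ohist u Q j) (ohist z Q' k) ->
    forall p, Q p (ohist u Q (j+k)) = Q' p (ohist z Q' k)) ->
 forall k, ostate u Q (j+k) = ostate z Q' k.
Proof.
move=> Hz Hc k; rewrite /ostate (shift Hz Hc) hlast_glue // hstart_ohist -Hz //.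
Qed.

End Gen.

Lemma find_none (p : pred nat) m : (forall i, i < m -> ~~ p i) -> find p (iota 0 m) = m.
Proof.
move=> H; have: ~~ has p (iota 0 m).
  by apply/hasPn => x; rewrite mem_iota add0n => /andP[_]; apply: H.
by rewrite has_find -leqNgt size_iota => Hle; apply/eqP; rewrite eqn_leq Hle -{2}(size_iota 0 m) find_size.
Qed.

Lemma find_first (p : pred nat) m j : j < m -> p j -> (forall i, i < j -> ~~ p i) ->
  find p (iota 0 m) = j.
Proof.
move=> Hjm Hpj Hb.
have Hh : has p (iota 0 m) by apply/hasP; exists j; rewrite // mem_iota.
have Hf := Hh; rewrite has_find size_iota in Hf.
have Hn := nth_find 0 Hh; rewrite nth_iota // add0n in Hn.
case: (ltngtP (find p (iota 0 m)) j) => // H.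
  by move: (Hb _ H); rewrite Hn.
by move: (before_find 0 H); rewrite nth_iota ?Hpj // (ltn_trans H).
Qed.

Lemma glb_ex (S : enat -> Prop) : exists x, is_glb S x.
Proof.
case: (classic (exists n, S (Some n))) => [Hex|Hno].
  pose q := fun n => if excluded_middle_informative (S (Some n)) then true else false.
  have Hq : exists n, q n.
    case: Hex => n Hn; exists n; rewrite /q; by case: excluded_middle_informative.
  case: (ex_minnP Hq) => m Hm Hmin.
  have Sm : S (Some m) by move: Hm; rewrite /q; case: excluded_middle_informative.
  exists (Some m); split.
    case=> [k Sk|] //=; apply: Hmin; rewrite /q; by case: excluded_middle_informative.
  by move=> z Hz; apply: Hz.
exists None; split.
  case=> [k Sk|] //=; apply: Hno; by exists k.
by move=> z _; case: z.
Qed.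

Lemma einf_spec S : is_glb S (einf S).
Proof. exact: (epsilon_spec (inhabits None) (is_glb S) (glb_ex S)). Qed.

Lemma lub_ex (S : enat -> Prop) : exists x, is_lub S x.
Proof.
case: (glb_ex (fun z => forall y, S y -> ele y z)) => x [H1 H2].
exists x; split.
  by move=> y Sy; apply: H2 => z Hz; apply: Hz.
by move=> z Hz; apply: H1.
Qed.

Lemma esup_spec S : is_lub S (esup S).
Proof. exact: (epsilon_spec (inhabits None) (is_lub S) (lub_ex S)). Qed.

Section Gen2.
Variable G : game.
Implicit Types (P Q : profile G) (u z : state G).

Lemma Cval_fin al z : Cval al z <> None -> forall sigma : profile G,
  exists Q, variant al sigma Q /\ pcost z Q al <> None.
Proof.
move=> HC sigma; apply: NNPP => Hno.
set T := (fun y => exists Q, variant al sigma Q /\ y = pcost z Q al).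
have [Hl _] := esup_spec (fun x => exists sigma : profile G, x = einf (fun y => exists Q, variant al sigma Q /\ y = pcost z Q al)).
have := Hl (einf T) (ex_intro _ sigma erefl).
have [_ Hg] := einf_spec T.
have : ele None (einf T).
  apply: Hg => y [Q [HQ ->]].
  by case E: (pcost z Q al) => //; exfalso; apply: Hno; exists Q; rewrite E.
rewrite /Cval in HC.
by case: (einf T) => //; case: (esup _) HC.
Qed.

Lemma out_cost_None (s : nat -> state G) a al :
  (forall k, s k \notin target al) -> out_cost s a al = None.
Proof.
move=> H; rewrite /out_cost; case: excluded_middle_informative => // -[k Hk].
by move: (H k); rewrite Hk.
Qed.

Lemma out_cost_Some (s : nat -> state G) a al :
  out_cost s a al <> None -> exists k, s k \in target al.
Proof. by rewrite /out_cost; case: excluded_middle_informative. Qed.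

Lemma out_cost_Some' (s : nat -> state G) a al k :
  s k \in target al -> out_cost s a al <> None.
Proof. by rewrite /out_cost; case: excluded_middle_informative => // H Hk; case: H; exists k. Qed.

Lemma ss_follow s0 P mu p Q k : (forall i, i <= k -> ostate s0 Q i = ostate s0 P i) ->
  second_strike s0 P mu p (ohist s0 Q k) = oact s0 P k p.
Proof.
move=> H; rewrite /second_strike size_ohist find_none ?eqxx //.
by move=> i Hi; rewrite nth_states // H // negbK.
Qed.

Lemma ss_punish s0 P mu Q al j' k :
  (forall i, i <= j' -> ostate s0 Q i = ostate s0 P i) ->
  ostate s0 Q j'.+1 != ostate s0 P j'.+1 ->
  (forall p, p <> al -> Q p (ohist s0 Q j') = oact s0 P j' p) ->
  forall p, second_strike s0 P mu p (ohist s0 Q (j'.+1 + k)) = mu al p (ostate s0 Q (j'.+1 + k)).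
Proof.
move=> Heq Hne Hf p; rewrite /second_strike size_ohist.
rewrite (@find_first _ _ j'.+1); first last.
- move=> i Hi; rewrite nth_states ?Heq ?negbK //; exact: leq_trans (ltnW Hi) (leq_addr _ _).
- by rewrite nth_states // leq_addr.
- by rewrite ltnS leq_addr.
rewrite ifF; last by apply/negbTE; rewrite neq_ltn ltnS leq_addr.
change (j'.+1 == 0) with false.
change (j'.+1.-1) with j'.
cbv iota.
rewrite nth_acts ?ltnS ?leq_addr //.
set b := oact s0 Q j'; set a := oact s0 P j'.
have Hbal : b al != a al.
  apply/negP => /eqP Hba; move/eqP: Hne; apply.
  rewrite !ostateS Heq //; congr delta.
  apply: functional_extensionality_dep => q.
  case: (q =P al) => [->|nq] //; exact: Hf.
have Hab : forall q, q <> al -> b q = a q by move=> q nq; exact: Hf.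
case: pickP => [al' /andP[_ /forallP Hq] | Hn].
  move: (Hq al); rewrite Hbal /= => /eqP <-; by [].
exfalso; move: (Hn al); rewrite Hbal /=; move/negP; apply.
apply/forallP => q; apply/implyP => Hq; apply/eqP; apply: NNPP => nq.
by move: Hq; rewrite Hab ?eqxx.
Qed.

End Gen2.

Lemma part1 (G : game) (P : profile G) : NE (v0 G) P ->
     forall n, safe (winners (v0 G) P) (ostate (v0 G) P n) (oact (v0 G) P n).
Proof.
move=> HNE n al Hal b Hb.
case EC: (Cval al _) => [c|] //; exfalso.
have HC : Cval al (delta (ostate (v0 G) P n) b) <> None by rewrite EC.
set z := delta (ostate (v0 G) P n) b in HC.
pose H0 := Hist (v0 G) (rcons (htrans (ohist (v0 G) P n)) (b, z)).
pose sigma : profile G := fun p h => P p (glue H0 h).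
have [Qt [HvQt HQt]] := Cval_fin HC sigma.
pose D := fun p (h : history G) => if size (htrans h) < n then P p h
   else if size (htrans h) == n then b p else Qt p (Hist z (drop n.+1 (htrans h))).
pose Q : profile G := fun p h => if p == al then D p h else P p h.
have HvQ : variant al P Q by move=> p np h; rewrite /Q; case: eqP.
have C1 : forall k, k <= n -> ohist (v0 G) Q k = ohist (v0 G) P k.
  elim=> [|k IH] Hk //=.
  rewrite IH ?(ltnW Hk) //.
  have -> : (fun p => Q p (ohist (v0 G) P k)) = (fun p => P p (ohist (v0 G) P k)) => //.
  apply: functional_extensionality_dep => p; rewrite /Q /D size_ohist Hk.
  by case: (p == al).
have C2 : ohist (v0 G) Q n.+1 = H0.
  rewrite /= C1 //.
  have -> : (fun p => Q p (ohist (v0 G) P n)) = b => //.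
  apply: functional_extensionality_dep => p; rewrite /Q /D size_ohist ltnn eqxx.
  case: (p =P al) => // np; by rewrite Hb.
have Hz : ostate (v0 G) Q n.+1 = z by rewrite /ostate C2 /hlast /= map_rcons last_rcons.
have Hsh := shift_state Hz.
have [k Hk] := out_cost_Some HQt.
have Hc : forall k, ohist (v0 G) Q (n.+1 + k) = glue (ohist (v0 G) Q n.+1) (ohist z Qt k) ->
    forall p, Q p (ohist (v0 G) Q (n.+1 + k)) = Qt p (ohist z Qt k).
  move=> k' Heq p; rewrite Heq C2 /Q.
  case: (p =P al) => [Ep|np].
    rewrite /D /glue /= size_cat size_ohist size_rcons size_ohist.
    rewrite ifF; last by rewrite ltnNge (leq_trans (leqnSn n)) ?leq_addr.
    rewrite gtn_eqF; last by rewrite ltnS leq_addr.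
    rewrite drop_cat size_rcons size_ohist ltnn subnn drop0.
    congr (Qt p _); by rewrite -[RHS]hist_eta hstart_ohist.
  by rewrite HvQt.
have Hk' : ostate (v0 G) Q (n.+1 + k) \in target al by rewrite (Hsh _ Hc).
have HP : pcost (v0 G) P al = None.
  apply: out_cost_None => k0; apply/negP => Hk0; move: Hal; rewrite inE.
  by case: excluded_middle_informative => // -[]; exists k0.
have HQ : pcost (v0 G) Q al <> None by apply: (out_cost_Some' Hk').
apply: (HNE al Q HvQ); rewrite HP; move: HQ.
by case: (pcost _ _ _).
Qed.

Lemma part2 (G : game) :
  (forall (u : state G) (W : {set player G}) (P : profile (Gstar G)),
     let s0 : state (Gstar G) := (u, W) in
     (forall n, (ostate s0 P n).2 = W) ->
     (forall n, safe (G := Gstar G) W (ostate s0 P n) (oact s0 P n)) ->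
     forall mu : forall al p : player (Gstar G), state (Gstar G) -> act p,
       punishing mu ->
       NE s0 (second_strike s0 P mu)).
Proof.
move=> u W P s0 H2 Hsafe mu Hpun al Q Hvar.
have Htg : forall x : state (Gstar G), (x \in target al) = (al \in x.2).
  by move=> x; rewrite /= inE.
case: (boolP (al \in W)) => HalW.
  have -> : pcost s0 (second_strike s0 P mu) al = Some 0.
    rewrite /pcost /out_cost; case: excluded_middle_informative => [H|[]]; last first.
      by exists 0; rewrite Htg.
    case: ex_minnP => m _ Hm.
    have -> : m = 0 by apply/eqP; rewrite -leqn0; apply: Hm; rewrite Htg.
    by rewrite big_ord0.
  case: (pcost _ _ _) => [m|] [] //= Hm Hne; apply: Hne; move: Hm; by rewrite leqn0 => /eqP ->.
suff -> : pcost s0 Q al = None by move=> [Ha Hb]; move: Ha Hb; case: (pcost _ _ _) => // _; apply.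
apply: out_cost_None.
case: (classic (exists k, ostate s0 Q k != ostate s0 P k)) => [Hex|Hno]; last first.
  move=> k; have -> : ostate s0 Q k = ostate s0 P k.
    by apply/eqP; apply: NNPP => Hk; apply: Hno; exists k; apply/negP.
  by rewrite Htg H2.
case: (ex_minnP Hex) => j Hj Hmin.
case: j Hj Hmin => [|j'] Hj Hmin; first by rewrite eqxx in Hj.
have Heq : forall i, i <= j' -> ostate s0 Q i = ostate s0 P i.
  move=> i Hi; apply/eqP; apply: NNPP => /negP Hne.
  by move: (Hmin i Hne); rewrite ltnNge Hi.
have Hf : forall p, p <> al -> Q p (ohist s0 Q j') = oact s0 P j' p.
  by move=> p np; rewrite Hvar // ss_follow.
have Hs := Hsafe j' al HalW (oact s0 Q j') Hf.
rewrite -Heq // -ostateS in Hs.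
set z := ostate s0 Q j'.+1 in Hs.
pose Q' : profile (Gstar G) := fun p h => if p == al then Q p (glue (ohist s0 Q j'.+1) h)
   else mu al p (hlast h).
have HvQ' : variant al (memoryless (mu al)) Q'.
  by move=> p np h; rewrite /Q'; case: eqP.
have HQ' := Hpun al z Q' HvQ'; rewrite Hs in HQ'.
have Hc : forall k, ohist s0 Q (j'.+1 + k) = glue (ohist s0 Q j'.+1) (ohist z Q' k) ->
    forall p, Q p (ohist s0 Q (j'.+1 + k)) = Q' p (ohist z Q' k).
  move=> k Hk p; rewrite /Q'; case: (p =P al) => [Ep|np].
    by subst p; rewrite Hk.
  rewrite Hvar // (ss_punish _ _ Heq Hj Hf).
  rewrite /ostate Hk hlast_glue // hstart_ohist //.
have Hsh := shift_state (erefl z) Hc.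
move=> k; case: (leqP k j') => Hk.
  by rewrite Heq // Htg H2.
rewrite -(subnKC Hk) Hsh; apply/negP => Hin.
apply: (out_cost_Some' (a := oact z Q') Hin); move: HQ'; rewrite /pcost; by case: (out_cost _ _ _).
Qed.

Theorem lemma2 (G : game) :
  (* (1) *)
  (forall P : profile G, NE (v0 G) P ->
     forall n, safe (winners (v0 G) P) (ostate (v0 G) P n) (oact (v0 G) P n))
  /\
  (* (2) *)
  (forall (u : state G) (W : {set player G}) (P : profile (Gstar G)),
     let s0 : state (Gstar G) := (u, W) in
     (forall n, (ostate s0 P n).2 = W) ->
     (forall n, safe (G := Gstar G) W (ostate s0 P n) (oact s0 P n)) ->
     forall mu : forall al p : player (Gstar G), state (Gstar G) -> act p,
       punishing mu ->
       NE s0 (second_strike s0 P mu)).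
Proof.
split; [exact: part1 | exact: part2].
Qed.
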